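(* Let $X \in \Lambda^2_{14} = \mathfrak{g}_2$. Then there exist a $\mathrm{G}_2$-adapted frame $\mathcal{B} = \{f_1,\dots,f_7\}$ and real numbers $\lambda\geq\nu\geq\mu\geq 0$ with $\lambda = \nu + \mu$ such that the matrix $[X]_{\mathcal{B}}$, whose $(i,j)$ entry is $X(f_i,f_j)$, is block diagonal with blocks $$ (0), \quad \begin{pmatrix} 0 & -\mu \\ \mu & 0\end{pmatrix}, \quad \begin{pmatrix} 0 & -\nu \\ \nu & 0\end{pmatrix}, \quad \begin{pmatrix} 0 & -\lambda \\ \lambda & 0\end{pmatrix} $$ (in this order, occupying indices $\{1\},\{2,3\},\{4,5\},\{6,7\}$), with all other entries zero. Moreover, exactly three cases occur: (i) if $\lambda=\mu$, then $\lambda=\mu=\nu=0$ and $X=0$; (ii) if $\lambda>0$ and $\mu=0$, then $\lambda=\nu$, $\operatorname{rank}X = 4$, and $\ker X$ is the associative $3$-plane spanned by $\{f_1,f_2,f_3\}$; (iii) if $\lambda>\mu>0$, then $\operatorname{rank}X=6$ and $\ker X$ is spanned by $f_1$.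
   Context: Equip $\mathbb{R}^7$ with its standard inner product, orientation and basis. Let $\varphi = e_{123} - e_{167} - e_{527} - e_{563} - e_{415} - e_{426} - e_{437}$ ($e_{ijk} = e_i\wedge e_j\wedge e_k$) and define $\times$ by $\langle u\times v,w\rangle = \varphi(u,v,w)$. A skew bilinear form $X$ is identified with the operator $X$ given by $X(a,b)=\langle X(a),b\rangle$. $\Lambda^2_{14}=\mathfrak{g}_2$ is the set of skew bilinear forms $X$ with $X(v\times w) = X(v)\times w + v\times X(w)$ for all $v,w$. A $\mathrm{G}_2$-adapted frame is an oriented orthonormal basis $\{f_1,\dots,f_7\}$ with $f_3 = f_1\times f_2$, $f_5 = f_1\times f_4$, $f_6 = f_2\times f_4$, $f_7 = f_3\times f_4$. A $3$-dimensional subspace is associative if closed under $\times$. *)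

(* Defs.v *)
(* Vectors of R^7 are row vectors 'rV[R]_7; indices are
   0-based ('I_7), so the paper's e_1..e_7 / f_1..f_7 are indices 0..6. *)
From HB Require Import structures.
From mathcomp Require Import all_boot all_order all_algebra.
From mathcomp Require Import reals.
Set Implicit Arguments. Unset Strict Implicit. Unset Printing Implicit Defensive.
Import Order.TTheory GRing.Theory Num.Theory.
Local Open Scope ring_scope.

Section G2.
Variable R : realType.
Notation vec := 'rV[R]_7.

Definition dot (u v : vec) : R := \sum_(i < 7) u 0 i * v 0 i.

Definition ev (k : 'I_7) : vec := delta_mx 0 k.

(* e_{ijk} = e_i /\ e_j /\ e_k evaluated on (u,v,w); indices 1-based as in paper *)
Definition e3 (i j k : nat) (u v w : vec) : R :=
  let c (x : vec) (n : nat) := x 0 (inord n.-1 : 'I_7) in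
  c u i * (c v j * c w k - c v k * c w j)
  - c u j * (c v i * c w k - c v k * c w i)
  + c u k * (c v i * c w j - c v j * c w i).

Definition phi (u v w : vec) : R :=
  e3 1 2 3 u v w - e3 1 6 7 u v w - e3 5 2 7 u v w - e3 5 6 3 u v w
  - e3 4 1 5 u v w - e3 4 2 6 u v w - e3 4 3 7 u v w.

Definition cross (u v : vec) : vec := \row_(k < 7) phi u v (ev k).

(* A bilinear form X on R^7 is represented by the matrix M with
   X(a,b) = a M b^T; the associated operator (X(a,b) = <X(a),b>) is
   a |-> a *m M. *)
Definition bform (M : 'M[R]_7) (a b : vec) : R := (a *m M *m b^T) 0 0.
Definition skew (M : 'M[R]_7) : Prop := M^T = - M.

Definition in_g2 (M : 'M[R]_7) : Prop :=
  skew M /\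
  forall v w : vec, cross v w *m M = cross (v *m M) w + cross v (w *m M).

Definition G2_adapted (F : 'M[R]_7) : Prop :=
  let f (n : nat) : vec := row (inord n.-1) F in
  [/\ forall i j : 'I_7, dot (row i F) (row j F) = (i == j)%:R,
      0 < \det F &
      [/\ f 3 = cross (f 1) (f 2),
          f 5 = cross (f 1) (f 4),
          f 6 = cross (f 2) (f 4) &
          f 7 = cross (f 3) (f 4)]].

Definition normal_form (mu nu lam : R) : 'M[R]_7 :=
  \matrix_(i < 7, j < 7)
    match nat_of_ord i, nat_of_ord j with
    | 1, 2 => - mu | 2, 1 => mu
    | 3, 4 => - nu | 4, 3 => nu
    | 5, 6 => - lam | 6, 5 => lam
    | _, _ => 0
    end.

Definition associative_set (S : vec -> Prop) : Prop :=
  forall u v, S u -> S v -> S (cross u v).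

Definition span3 (a b c : vec) (x : vec) : Prop :=
  exists c1 c2 c3 : R, x = c1 *: a + c2 *: b + c3 *: c.
Definition span1 (a : vec) (x : vec) : Prop := exists c1 : R, x = c1 *: a.

Definition kerX (M : 'M[R]_7) (x : vec) : Prop := x *m M = 0.

End G2.

(* Main.v *)
Require Import Defs.
From HB Require Import structures.
From mathcomp Require Import all_boot all_order all_algebra all_fingroup.
From mathcomp Require Import reals.
From mathcomp Require Import ring lra zify.
From mathcomp Require Import polyrcf complex.
Set Implicit Arguments. Unset Strict Implicit. Unset Printing Implicit Defensive.
Import Order.TTheory GRing.Theory Num.Theory.
Local Open Scope ring_scope.


Section Alt.
Variable (R : comNzRingType) (n : nat).

Definition rowset (A : 'M[R]_n) (i0 : 'I_n) (v : 'rV[R]_n) : 'M[R]_n :=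
  \matrix_(i, j) if i == i0 then v 0 j else A i j.
Definition mlin (w : 'M[R]_n -> R) := forall A i0 (a : R) (v u : 'rV_n),
  w (rowset A i0 (a *: v + u)) = a * w (rowset A i0 v) + w (rowset A i0 u).
Definition altf (w : 'M[R]_n -> R) := forall A (i1 i2 : 'I_n),
  i1 != i2 -> row i1 A = row i2 A -> w A = 0.

Lemma row_rowset A i0 v i : row i (rowset A i0 v) = if i == i0 then v else row i A.
Proof. by apply/rowP => j; rewrite !mxE; case: eqP => _; rewrite ?mxE // ord1. Qed.

Lemma rowset_id A i0 : rowset A i0 (row i0 A) = A.
Proof. by apply/matrixP => i j; rewrite !mxE; case: eqP => // ->. Qed.

Lemma rowsetC A i1 i2 v u : i1 != i2 ->
  rowset (rowset A i1 v) i2 u = rowset (rowset A i2 u) i1 v.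
Proof.
move=> ne; apply/matrixP => i j; rewrite !mxE.
case: (eqVneq i i2) => [e2|n2]; case: (eqVneq i i1) => [e1|n1] //.
by move: ne; rewrite -e1 -e2 eqxx.
Qed.

Lemma det_mlin : mlin determinant.
Proof.
move=> A i0 a v u; rewrite -[X in _ = _ + X]mul1r; apply: (determinant_multilinear (i0:=i0)).
- by rewrite !row_rowset eqxx scale1r.
- by apply/matrixP => i j; rewrite !mxE eq_sym (negPf (neq_lift _ _)).
- by apply/matrixP => i j; rewrite !mxE eq_sym (negPf (neq_lift _ _)).
Qed.

Lemma det_altf : altf determinant.
Proof.
move=> A i1 i2 ne eq; apply: (determinant_alternate ne) => j.
by have := congr1 (fun r : 'rV_n => r 0 j) eq; rewrite !mxE.
Qed.

Variable w : 'M[R]_n -> R.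
Hypothesis wl : mlin w.
Hypothesis wa : altf w.

Lemma w_rowset0 A i0 : w (rowset A i0 0) = 0.
Proof.
have := wl A i0 1 0 0; rewrite scaler0 addr0 mul1r.
by move/(congr1 (fun t => t - w (rowset A i0 0))); rewrite subrr addrK => <-.
Qed.

Lemma w_sum A i0 (c : 'I_n -> R) :
  w (rowset A i0 (\sum_j c j *: delta_mx 0 j)) =
  \sum_j c j * w (rowset A i0 (delta_mx 0 j)).
Proof.
apply: (big_rec2 (fun (s : R) (v : 'rV_n) => w (rowset A i0 v) = s)).
  exact: w_rowset0.
by move=> j s v _ <-; rewrite wl.
Qed.

Lemma w_xrow A i1 i2 : i1 != i2 -> w (xrow i1 i2 A) = - w A.
Proof.
move=> ne.
pose M v u := rowset (rowset A i1 v) i2 u.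
have MA : M (row i1 A) (row i2 A) = A.
  by rewrite /M !rowset_id.
have MX : M (row i2 A) (row i1 A) = xrow i1 i2 A.
  apply/matrixP => i j; rewrite xrowEsub !mxE.
  case: (eqVneq i i2) => [->|n2]; first by rewrite tpermR.
  case: (eqVneq i i1) => [->|n1]; first by rewrite tpermL.
  by rewrite tpermD // eq_sym.
have M0 v : w (M v v) = 0.
  apply: (wa ne); by rewrite /M !row_rowset (negPf ne) !eqxx.
have Ml v1 v2 u : w (M (v1 + v2) u) = w (M v1 u) + w (M v2 u).
  by rewrite /M !(rowsetC _ _ _ ne) -{1}[v1]scale1r wl mul1r.
have Mr v u1 u2 : w (M v (u1 + u2)) = w (M v u1) + w (M v u2).
  by rewrite /M -{1}[u1]scale1r wl mul1r.
have := M0 (row i1 A + row i2 A).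
rewrite Ml !Mr !M0 add0r addr0 MA MX => /eqP; rewrite addr_eq0 => /eqP ->.
by rewrite opprK.
Qed.

Hypothesis w1 : w 1%:M = 0.

Lemma w_perm (s : 'S_n) : w (rowsub s 1%:M) = 0.
Proof.
case: (prod_tpermP s) => ts -> {s}.
elim: ts => [|t ts IH] /=.
  rewrite big_nil => _; rewrite -w1; congr w; apply/matrixP => i j.
  by rewrite !mxE perm1.
rewrite big_cons => /andP [dt dts].
have -> : rowsub (tperm t.1 t.2 * \prod_(t <- ts) tperm t.1 t.2)%g 1%:M
   = xrow t.1 t.2 (rowsub (\prod_(t <- ts) tperm t.1 t.2)%g (1%:M : 'M[R]_n)).
  by apply/matrixP => i j; rewrite xrowEsub !mxE permM.
by rewrite w_xrow // IH // oppr0.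
Qed.

Lemma w_std A : (forall i, exists j, row i A = delta_mx 0 j) -> w A = 0.
Proof.
move=> /fin_all_exists [f Hf].
have -> : A = rowsub f 1%:M.
  by apply/row_matrixP => i; rewrite row_rowsub row1 Hf.
case: (boolP (injectiveb f)) => [/injectiveP injf | /injectivePn [i1 [i2 ne e]]].
  have -> : rowsub f 1%:M = rowsub (perm injf) (1%:M : 'M[R]_n).
    by apply/matrixP => i j; rewrite !mxE permE.
  exact: w_perm.
by apply: (wa ne); rewrite !row_rowsub e.
Qed.

Lemma w_zero A : w A = 0.
Proof.
suff H : forall m, forall A, (forall i : 'I_n, (m <= i)%N -> exists j, row i A = delta_mx 0 j) -> w A = 0.
  by apply: (H n) => i; rewrite leqNgt ltn_ord.
elim=> [|m IH] B HB; first by apply: w_std => i; apply: HB.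
case: (ltnP m n) => [mn|nm]; last first.
  apply: IH => i mi; exfalso; move: (ltn_ord i); rewrite ltnNge.
  by rewrite (leq_trans nm mi).
pose i0 := Ordinal mn.
rewrite -(rowset_id B i0) [row i0 B]row_sum_delta w_sum big1 // => j _.
rewrite IH ?mulr0 // => i mi; rewrite row_rowset.
case: eqP => [_|ne]; first by exists j.
apply: HB; rewrite ltn_neqAle mi andbT; apply/eqP => e; apply: ne.
by apply: val_inj; rewrite /= e.
Qed.

End Alt.

Lemma alt_unique (R : comNzRingType) n (w : 'M[R]_n -> R) :
  mlin w -> altf w -> forall A, w A = \det A * w 1%:M.
Proof.
move=> wl wa A.
pose p B := w B - \det B * w 1%:M.
have pl : mlin p.
  move=> B i0 a v u; rewrite /p !wl det_mlin; ring.
have pa : altf p.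
  move=> B i1 i2 ne e; rewrite /p (wa _ _ _ ne e) (det_altf ne e); ring.
have p1 : p 1%:M = 0 by rewrite /p det1 mul1r subrr.
by apply/eqP; rewrite -subr_eq0; apply/eqP; apply: (w_zero pl pa p1).
Qed.

Section Omega.
Variable R : realType.
Notation vec := 'rV[R]_7.
Variable L : vec -> R.
Variable B : vec -> vec -> R.
Hypothesis Llin : forall a v w, L (a *: v + w) = a * L v + L w.
Hypothesis BDl : forall a v w y, B (a *: v + w) y = a * B v y + B w y.
Hypothesis Bsk : forall x y, B y x = - B x y.
Hypothesis Bxx : forall x, B x x = 0.
Lemma BDr a v w y : B y (a *: v + w) = a * B y v + B y w.
Proof. by rewrite Bsk BDl (Bsk v) (Bsk w); ring. Qed.
Ltac normB x := rewrite ?Bxx; repeat match goal with |- context [B ?y x] => rewrite (Bsk y x) end.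
Definition Pf6 y1 y2 y3 y4 y5 y6 := B y1 y2 * B y3 y4 * B y5 y6 - B y1 y2 * B y3 y5 * B y4 y6 + B y1 y2 * B y3 y6 * B y4 y5 - B y1 y3 * B y2 y4 * B y5 y6 + B y1 y3 * B y2 y5 * B y4 y6 - B y1 y3 * B y2 y6 * B y4 y5 + B y1 y4 * B y2 y3 * B y5 y6 - B y1 y4 * B y2 y5 * B y3 y6 + B y1 y4 * B y2 y6 * B y3 y5 - B y1 y5 * B y2 y3 * B y4 y6 + B y1 y5 * B y2 y4 * B y3 y6 - B y1 y5 * B y2 y6 * B y3 y4 + B y1 y6 * B y2 y3 * B y4 y5 - B y1 y6 * B y2 y4 * B y3 y5 + B y1 y6 * B y2 y5 * B y3 y4.
Definition Om x1 x2 x3 x4 x5 x6 x7 := L x1 * Pf6 x2 x3 x4 x5 x6 x7 - L x2 * Pf6 x1 x3 x4 x5 x6 x7 + L x3 * Pf6 x1 x2 x4 x5 x6 x7 - L x4 * Pf6 x1 x2 x3 x5 x6 x7 + L x5 * Pf6 x1 x2 x3 x4 x6 x7 - L x6 * Pf6 x1 x2 x3 x4 x5 x7 + L x7 * Pf6 x1 x2 x3 x4 x5 x6.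
Lemma Om_lin0 a v w x2 x3 x4 x5 x6 x7 : Om (a *: v + w) x2 x3 x4 x5 x6 x7 = a * Om v x2 x3 x4 x5 x6 x7 + Om w x2 x3 x4 x5 x6 x7.
Proof. rewrite /Om /Pf6 !(Llin, BDl, BDr); ring. Qed.
Lemma Om_lin1 a v w x1 x3 x4 x5 x6 x7 : Om x1 (a *: v + w) x3 x4 x5 x6 x7 = a * Om x1 v x3 x4 x5 x6 x7 + Om x1 w x3 x4 x5 x6 x7.
Proof. rewrite /Om /Pf6 !(Llin, BDl, BDr); ring. Qed.
Lemma Om_lin2 a v w x1 x2 x4 x5 x6 x7 : Om x1 x2 (a *: v + w) x4 x5 x6 x7 = a * Om x1 x2 v x4 x5 x6 x7 + Om x1 x2 w x4 x5 x6 x7.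
Proof. rewrite /Om /Pf6 !(Llin, BDl, BDr); ring. Qed.
Lemma Om_lin3 a v w x1 x2 x3 x5 x6 x7 : Om x1 x2 x3 (a *: v + w) x5 x6 x7 = a * Om x1 x2 x3 v x5 x6 x7 + Om x1 x2 x3 w x5 x6 x7.
Proof. rewrite /Om /Pf6 !(Llin, BDl, BDr); ring. Qed.
Lemma Om_lin4 a v w x1 x2 x3 x4 x6 x7 : Om x1 x2 x3 x4 (a *: v + w) x6 x7 = a * Om x1 x2 x3 x4 v x6 x7 + Om x1 x2 x3 x4 w x6 x7.
Proof. rewrite /Om /Pf6 !(Llin, BDl, BDr); ring. Qed.
Lemma Om_lin5 a v w x1 x2 x3 x4 x5 x7 : Om x1 x2 x3 x4 x5 (a *: v + w) x7 = a * Om x1 x2 x3 x4 x5 v x7 + Om x1 x2 x3 x4 x5 w x7.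
Proof. rewrite /Om /Pf6 !(Llin, BDl, BDr); ring. Qed.
Lemma Om_lin6 a v w x1 x2 x3 x4 x5 x6 : Om x1 x2 x3 x4 x5 x6 (a *: v + w) = a * Om x1 x2 x3 x4 x5 x6 v + Om x1 x2 x3 x4 x5 x6 w.
Proof. rewrite /Om /Pf6 !(Llin, BDl, BDr); ring. Qed.
Lemma Om_alt01 x1 x3 x4 x5 x6 x7 : Om x1 x1 x3 x4 x5 x6 x7 = 0.
Proof. rewrite /Om /Pf6; normB x1; ring. Qed.
Lemma Om_alt02 x1 x2 x4 x5 x6 x7 : Om x1 x2 x1 x4 x5 x6 x7 = 0.
Proof. rewrite /Om /Pf6; normB x1; ring. Qed.
Lemma Om_alt03 x1 x2 x3 x5 x6 x7 : Om x1 x2 x3 x1 x5 x6 x7 = 0.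
Proof. rewrite /Om /Pf6; normB x1; ring. Qed.
Lemma Om_alt04 x1 x2 x3 x4 x6 x7 : Om x1 x2 x3 x4 x1 x6 x7 = 0.
Proof. rewrite /Om /Pf6; normB x1; ring. Qed.
Lemma Om_alt05 x1 x2 x3 x4 x5 x7 : Om x1 x2 x3 x4 x5 x1 x7 = 0.
Proof. rewrite /Om /Pf6; normB x1; ring. Qed.
Lemma Om_alt06 x1 x2 x3 x4 x5 x6 : Om x1 x2 x3 x4 x5 x6 x1 = 0.
Proof. rewrite /Om /Pf6; normB x1; ring. Qed.
Lemma Om_alt12 x1 x2 x4 x5 x6 x7 : Om x1 x2 x2 x4 x5 x6 x7 = 0.
Proof. rewrite /Om /Pf6; normB x2; ring. Qed.
Lemma Om_alt13 x1 x2 x3 x5 x6 x7 : Om x1 x2 x3 x2 x5 x6 x7 = 0.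
Proof. rewrite /Om /Pf6; normB x2; ring. Qed.
Lemma Om_alt14 x1 x2 x3 x4 x6 x7 : Om x1 x2 x3 x4 x2 x6 x7 = 0.
Proof. rewrite /Om /Pf6; normB x2; ring. Qed.
Lemma Om_alt15 x1 x2 x3 x4 x5 x7 : Om x1 x2 x3 x4 x5 x2 x7 = 0.
Proof. rewrite /Om /Pf6; normB x2; ring. Qed.
Lemma Om_alt16 x1 x2 x3 x4 x5 x6 : Om x1 x2 x3 x4 x5 x6 x2 = 0.
Proof. rewrite /Om /Pf6; normB x2; ring. Qed.
Lemma Om_alt23 x1 x2 x3 x5 x6 x7 : Om x1 x2 x3 x3 x5 x6 x7 = 0.
Proof. rewrite /Om /Pf6; normB x3; ring. Qed.
Lemma Om_alt24 x1 x2 x3 x4 x6 x7 : Om x1 x2 x3 x4 x3 x6 x7 = 0.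
Proof. rewrite /Om /Pf6; normB x3; ring. Qed.
Lemma Om_alt25 x1 x2 x3 x4 x5 x7 : Om x1 x2 x3 x4 x5 x3 x7 = 0.
Proof. rewrite /Om /Pf6; normB x3; ring. Qed.
Lemma Om_alt26 x1 x2 x3 x4 x5 x6 : Om x1 x2 x3 x4 x5 x6 x3 = 0.
Proof. rewrite /Om /Pf6; normB x3; ring. Qed.
Lemma Om_alt34 x1 x2 x3 x4 x6 x7 : Om x1 x2 x3 x4 x4 x6 x7 = 0.
Proof. rewrite /Om /Pf6; normB x4; ring. Qed.
Lemma Om_alt35 x1 x2 x3 x4 x5 x7 : Om x1 x2 x3 x4 x5 x4 x7 = 0.
Proof. rewrite /Om /Pf6; normB x4; ring. Qed.
Lemma Om_alt36 x1 x2 x3 x4 x5 x6 : Om x1 x2 x3 x4 x5 x6 x4 = 0.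
Proof. rewrite /Om /Pf6; normB x4; ring. Qed.
Lemma Om_alt45 x1 x2 x3 x4 x5 x7 : Om x1 x2 x3 x4 x5 x5 x7 = 0.
Proof. rewrite /Om /Pf6; normB x5; ring. Qed.
Lemma Om_alt46 x1 x2 x3 x4 x5 x6 : Om x1 x2 x3 x4 x5 x6 x5 = 0.
Proof. rewrite /Om /Pf6; normB x5; ring. Qed.
Lemma Om_alt56 x1 x2 x3 x4 x5 x6 : Om x1 x2 x3 x4 x5 x6 x6 = 0.
Proof. rewrite /Om /Pf6; normB x6; ring. Qed.

Lemma inord_eq7 (k m : nat) : (k < 7)%N -> (m < 7)%N -> ((inord k : 'I_7) == inord m) = (k == m).
Proof. by move=> hk hm; rewrite -val_eqE /= !inordK. Qed.

Definition omM (A : 'M[R]_7) := Om (row (inord 0) A) (row (inord 1) A) (row (inord 2) A)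
  (row (inord 3) A) (row (inord 4) A) (row (inord 5) A) (row (inord 6) A).

Lemma omM_mlin : mlin omM.
Proof.
move=> A i0 a v u; rewrite -(inord_val i0); case: i0 => [k hk] /=.
rewrite /omM !row_rowset !inord_eq7 //.
case: k hk => [|[|[|[|[|[|[|k]]]]]]] hk //=.
- exact: Om_lin0.
- exact: Om_lin1.
- exact: Om_lin2.
- exact: Om_lin3.
- exact: Om_lin4.
- exact: Om_lin5.
- exact: Om_lin6.
Qed.

Lemma omM_alt : altf omM.
Proof.
move=> A i1 i2 ne E.
wlog lt: i1 i2 ne E / (i1 < i2)%N.
  move=> H; case: (ltngtP i1 i2) => [l|l|e]; first exact: (H _ _ ne E l).
    by apply: (H i2 i1 _ (esym E) l); rewrite eq_sym.
  by move/eqP: ne; case; apply: val_inj.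
rewrite -(inord_val i1) -(inord_val i2) in E.
case: i1 i2 lt E {ne} => [k1 h1] [k2 h2] /= lt E.
rewrite /omM.
case: k1 h1 lt E => [|[|[|[|[|[|[|k1]]]]]]] h1 lt E //;
case: k2 h2 lt E => [|[|[|[|[|[|[|k2]]]]]]] h2 lt E //.
- by rewrite -E; apply: Om_alt01.
- by rewrite -E; apply: Om_alt02.
- by rewrite -E; apply: Om_alt03.
- by rewrite -E; apply: Om_alt04.
- by rewrite -E; apply: Om_alt05.
- by rewrite -E; apply: Om_alt06.
- by rewrite -E; apply: Om_alt12.
- by rewrite -E; apply: Om_alt13.
- by rewrite -E; apply: Om_alt14.
- by rewrite -E; apply: Om_alt15.
- by rewrite -E; apply: Om_alt16.
- by rewrite -E; apply: Om_alt23.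
- by rewrite -E; apply: Om_alt24.
- by rewrite -E; apply: Om_alt25.
- by rewrite -E; apply: Om_alt26.
- by rewrite -E; apply: Om_alt34.
- by rewrite -E; apply: Om_alt35.
- by rewrite -E; apply: Om_alt36.
- by rewrite -E; apply: Om_alt45.
- by rewrite -E; apply: Om_alt46.
- by rewrite -E; apply: Om_alt56.
Qed.
End Omega.

Section G2L.
Variable R : realType.
Notation vec := 'rV[R]_7.
Implicit Types u v w : vec.

Lemma ev_inord (a b : nat) : (a < 7)%N -> (b < 7)%N ->
  (ev R (inord a)) 0 (inord b) = if a == b then 1 else 0.
Proof.
move=> ha hb; rewrite /ev mxE eqxx /=.
have -> : ((inord b : 'I_7) == inord a) = (a == b) by rewrite -val_eqE /= !inordK // eq_sym.
by case: (a == b).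
Qed.

Lemma crossE u v k : (cross u v) 0 k = phi u v (ev R k).
Proof. by rewrite mxE. Qed.

Ltac simpl_ev := rewrite /phi /e3 /= ?ev_inord //=; ring.

Lemma cross0 u v : (cross u v) 0 (inord 0) = u 0 (inord 1) * v 0 (inord 2) - u 0 (inord 2) * v 0 (inord 1) + u 0 (inord 3) * v 0 (inord 4) - u 0 (inord 4) * v 0 (inord 3) - u 0 (inord 5) * v 0 (inord 6) + u 0 (inord 6) * v 0 (inord 5).
Proof. by rewrite crossE; simpl_ev. Qed.
Lemma cross1 u v : (cross u v) 0 (inord 1) = - u 0 (inord 0) * v 0 (inord 2) + u 0 (inord 2) * v 0 (inord 0) + u 0 (inord 3) * v 0 (inord 5) + u 0 (inord 4) * v 0 (inord 6) - u 0 (inord 5) * v 0 (inord 3) - u 0 (inord 6) * v 0 (inord 4).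
Proof. by rewrite crossE; simpl_ev. Qed.
Lemma cross2 u v : (cross u v) 0 (inord 2) = u 0 (inord 0) * v 0 (inord 1) - u 0 (inord 1) * v 0 (inord 0) + u 0 (inord 3) * v 0 (inord 6) - u 0 (inord 4) * v 0 (inord 5) + u 0 (inord 5) * v 0 (inord 4) - u 0 (inord 6) * v 0 (inord 3).
Proof. by rewrite crossE; simpl_ev. Qed.
Lemma cross3 u v : (cross u v) 0 (inord 3) = - u 0 (inord 0) * v 0 (inord 4) - u 0 (inord 1) * v 0 (inord 5) - u 0 (inord 2) * v 0 (inord 6) + u 0 (inord 4) * v 0 (inord 0) + u 0 (inord 5) * v 0 (inord 1) + u 0 (inord 6) * v 0 (inord 2).
Proof. by rewrite crossE; simpl_ev. Qed.
Lemma cross4 u v : (cross u v) 0 (inord 4) = u 0 (inord 0) * v 0 (inord 3) - u 0 (inord 1) * v 0 (inord 6) + u 0 (inord 2) * v 0 (inord 5) - u 0 (inord 3) * v 0 (inord 0) - u 0 (inord 5) * v 0 (inord 2) + u 0 (inord 6) * v 0 (inord 1).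
Proof. by rewrite crossE; simpl_ev. Qed.
Lemma cross5 u v : (cross u v) 0 (inord 5) = u 0 (inord 0) * v 0 (inord 6) + u 0 (inord 1) * v 0 (inord 3) - u 0 (inord 2) * v 0 (inord 4) - u 0 (inord 3) * v 0 (inord 1) + u 0 (inord 4) * v 0 (inord 2) - u 0 (inord 6) * v 0 (inord 0).
Proof. by rewrite crossE; simpl_ev. Qed.
Lemma cross6 u v : (cross u v) 0 (inord 6) = - u 0 (inord 0) * v 0 (inord 5) + u 0 (inord 1) * v 0 (inord 4) + u 0 (inord 2) * v 0 (inord 3) - u 0 (inord 3) * v 0 (inord 2) - u 0 (inord 4) * v 0 (inord 1) + u 0 (inord 5) * v 0 (inord 0).
Proof. by rewrite crossE; simpl_ev. Qed.

Lemma vec7P u v :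
  u 0 (inord 0) = v 0 (inord 0) -> u 0 (inord 1) = v 0 (inord 1) ->
  u 0 (inord 2) = v 0 (inord 2) -> u 0 (inord 3) = v 0 (inord 3) ->
  u 0 (inord 4) = v 0 (inord 4) -> u 0 (inord 5) = v 0 (inord 5) ->
  u 0 (inord 6) = v 0 (inord 6) -> u = v.
Proof.
move=> h0 h1 h2 h3 h4 h5 h6; apply/rowP => i; rewrite -(inord_val i).
case: i => [m Hm] /=.
case: m Hm => [|m] Hm //; case: m Hm => [|m] Hm //; case: m Hm => [|m] Hm //.
case: m Hm => [|m] Hm //; case: m Hm => [|m] Hm //; case: m Hm => [|m] Hm //.
by case: m Hm => [|m] Hm.
Qed.

Lemma dotE u v : dot u v = u 0 (inord 0) * v 0 (inord 0) + u 0 (inord 1) * v 0 (inord 1)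
  + u 0 (inord 2) * v 0 (inord 2) + u 0 (inord 3) * v 0 (inord 3)
  + u 0 (inord 4) * v 0 (inord 4) + u 0 (inord 5) * v 0 (inord 5)
  + u 0 (inord 6) * v 0 (inord 6).
Proof.
rewrite /dot (eq_bigr (fun i : 'I_7 => u 0 (inord i) * v 0 (inord i))); last first.
  by move=> i _; rewrite inord_val.
rewrite -(big_mkord xpredT (fun i => u 0 (inord i) * v 0 (inord i))).
by rewrite /index_iota /= !big_cons big_nil addr0 !addrA.
Qed.

Lemma vaddE u v k : (u + v) 0 k = u 0 k + v 0 k. Proof. by rewrite mxE. Qed.
Lemma vscaleE a u k : (a *: u) 0 k = a * u 0 k. Proof. by rewrite mxE. Qed.
Lemma voppE u k : (- u) 0 k = - u 0 k. Proof. by rewrite mxE. Qed.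
Lemma v0E k : (0 : vec) 0 k = 0. Proof. by rewrite mxE. Qed.
Ltac crossrw := repeat rewrite ?cross0 ?cross1 ?cross2 ?cross3 ?cross4 ?cross5 ?cross6.
Ltac vec_ring := apply: vec7P; crossrw; rewrite ?dotE ?vaddE ?vscaleE ?voppE ?v0E; crossrw; rewrite ?dotE ?vaddE ?vscaleE ?voppE ?v0E; ring.
Ltac sc_ring := crossrw; rewrite ?dotE ?vaddE ?vscaleE ?voppE ?v0E; crossrw; rewrite ?dotE ?vaddE ?vscaleE ?voppE ?v0E; ring.

Lemma crossDl a u v w : cross (a *: u + v) w = a *: cross u w + cross v w.
Proof. vec_ring. Qed.
Lemma crossDr a u v w : cross w (a *: u + v) = a *: cross w u + cross w v.
Proof. vec_ring. Qed.
Lemma crossC u v : cross v u = - cross u v.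
Proof. vec_ring. Qed.
Lemma crossxx u : cross u u = 0.
Proof. vec_ring. Qed.
Lemma dotC u v : dot u v = dot v u.
Proof. sc_ring. Qed.
Lemma dotDl a u v w : dot (a *: u + v) w = a * dot u w + dot v w.
Proof. sc_ring. Qed.
Lemma dotDr a u v w : dot w (a *: u + v) = a * dot w u + dot w v.
Proof. sc_ring. Qed.
Lemma dot_crossC u v w : dot (cross u v) w = - dot (cross u w) v.
Proof. sc_ring. Qed.
Lemma dot_cross_cyc u v w : dot (cross u v) w = dot (cross v w) u.
Proof. sc_ring. Qed.
Lemma cross_cross_same u v : cross u (cross u v) = dot u v *: u - dot u u *: v.
Proof. vec_ring. Qed.
Lemma cross_assoc u v w :
  cross u (cross v w) + cross (cross u v) w = (2 * dot u w) *: v - dot u v *: w - dot v w *: u.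
Proof. vec_ring. Qed.
Lemma dot_cross_cross u v w :
  dot (cross u v) (cross u w) = dot u u * dot v w - dot u v * dot u w.
Proof. sc_ring. Qed.

Lemma crossDl1 u v w : cross (u + v) w = cross u w + cross v w. Proof. vec_ring. Qed.
Lemma crossDr1 u v w : cross w (u + v) = cross w u + cross w v. Proof. vec_ring. Qed.
Lemma crossZl a u w : cross (a *: u) w = a *: cross u w. Proof. vec_ring. Qed.
Lemma crossZr a u w : cross w (a *: u) = a *: cross w u. Proof. vec_ring. Qed.
Lemma crossNl u w : cross (- u) w = - cross u w. Proof. vec_ring. Qed.
Lemma crossNr u w : cross w (- u) = - cross w u. Proof. vec_ring. Qed.
Lemma cross0l u : cross 0 u = 0. Proof. vec_ring. Qed.
Lemma cross0r u : cross u 0 = 0. Proof. vec_ring. Qed.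
Lemma dotDl1 u v w : dot (u + v) w = dot u w + dot v w. Proof. sc_ring. Qed.
Lemma dotDr1 u v w : dot w (u + v) = dot w u + dot w v. Proof. sc_ring. Qed.
Lemma dotZl a u w : dot (a *: u) w = a * dot u w. Proof. sc_ring. Qed.
Lemma dotZr a u w : dot w (a *: u) = a * dot w u. Proof. sc_ring. Qed.
Lemma dotNl u w : dot (- u) w = - dot u w. Proof. sc_ring. Qed.
Lemma dotNr u w : dot w (- u) = - dot w u. Proof. sc_ring. Qed.
Lemma dot0l u : dot 0 u = 0. Proof. sc_ring. Qed.
Lemma dot0r u : dot u 0 = 0. Proof. sc_ring. Qed.
Lemma P1 u v : dot u (cross u v) = 0. Proof. sc_ring. Qed.
Lemma P2 u v : dot v (cross u v) = 0. Proof. sc_ring. Qed.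
Lemma P3 u v : dot (cross u v) u = 0. Proof. sc_ring. Qed.
Lemma P4 u v : dot (cross u v) v = 0. Proof. sc_ring. Qed.
Lemma CC1 u v w : dot (cross u v) (cross u w) = dot u u * dot v w - dot u v * dot u w. Proof. sc_ring. Qed.
Lemma CC2 u v w : dot (cross v u) (cross w u) = dot u u * dot v w - dot u v * dot u w. Proof. sc_ring. Qed.
Lemma CC3 u v w : dot (cross u v) (cross w u) = - (dot u u * dot v w - dot u v * dot u w). Proof. sc_ring. Qed.
Lemma CC4 u v w : dot (cross v u) (cross u w) = - (dot u u * dot v w - dot u v * dot u w). Proof. sc_ring. Qed.
Lemma dot_ev u k : dot u (ev R k) = u 0 k.
Proof.
rewrite /dot (bigD1 k) //= big1 => [|i ik]; rewrite /ev !mxE ?eqxx ?mulr1 ?addr0 //.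
by rewrite /= (negPf ik) mulr0.
Qed.
End G2L.

Ltac crossrw := repeat rewrite ?cross0 ?cross1 ?cross2 ?cross3 ?cross4 ?cross5 ?cross6.
Ltac vec_ring := apply: vec7P; crossrw; rewrite ?dotE ?vaddE ?vscaleE ?voppE ?v0E; crossrw; rewrite ?dotE ?vaddE ?vscaleE ?voppE ?v0E; ring.


Section DetF.
Variable R : realType.
Notation vec := 'rV[R]_7.
Lemma B00 u : dot (cross u (ev R (inord 0))) (ev R (inord 0)) = 0.
Proof. rewrite dot_ev; crossrw; rewrite ?ev_inord //=; ring. Qed.
Lemma B01 u : dot (cross u (ev R (inord 0))) (ev R (inord 1)) = u 0 (inord 2).
Proof. rewrite dot_ev; crossrw; rewrite ?ev_inord //=; ring. Qed.
Lemma B02 u : dot (cross u (ev R (inord 0))) (ev R (inord 2)) = - u 0 (inord 1).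
Proof. rewrite dot_ev; crossrw; rewrite ?ev_inord //=; ring. Qed.
Lemma B03 u : dot (cross u (ev R (inord 0))) (ev R (inord 3)) = u 0 (inord 4).
Proof. rewrite dot_ev; crossrw; rewrite ?ev_inord //=; ring. Qed.
Lemma B04 u : dot (cross u (ev R (inord 0))) (ev R (inord 4)) = - u 0 (inord 3).
Proof. rewrite dot_ev; crossrw; rewrite ?ev_inord //=; ring. Qed.
Lemma B05 u : dot (cross u (ev R (inord 0))) (ev R (inord 5)) = - u 0 (inord 6).
Proof. rewrite dot_ev; crossrw; rewrite ?ev_inord //=; ring. Qed.
Lemma B06 u : dot (cross u (ev R (inord 0))) (ev R (inord 6)) = u 0 (inord 5).
Proof. rewrite dot_ev; crossrw; rewrite ?ev_inord //=; ring. Qed.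
Lemma B10 u : dot (cross u (ev R (inord 1))) (ev R (inord 0)) = - u 0 (inord 2).
Proof. rewrite dot_ev; crossrw; rewrite ?ev_inord //=; ring. Qed.
Lemma B11 u : dot (cross u (ev R (inord 1))) (ev R (inord 1)) = 0.
Proof. rewrite dot_ev; crossrw; rewrite ?ev_inord //=; ring. Qed.
Lemma B12 u : dot (cross u (ev R (inord 1))) (ev R (inord 2)) = u 0 (inord 0).
Proof. rewrite dot_ev; crossrw; rewrite ?ev_inord //=; ring. Qed.
Lemma B13 u : dot (cross u (ev R (inord 1))) (ev R (inord 3)) = u 0 (inord 5).
Proof. rewrite dot_ev; crossrw; rewrite ?ev_inord //=; ring. Qed.
Lemma B14 u : dot (cross u (ev R (inord 1))) (ev R (inord 4)) = u 0 (inord 6).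
Proof. rewrite dot_ev; crossrw; rewrite ?ev_inord //=; ring. Qed.
Lemma B15 u : dot (cross u (ev R (inord 1))) (ev R (inord 5)) = - u 0 (inord 3).
Proof. rewrite dot_ev; crossrw; rewrite ?ev_inord //=; ring. Qed.
Lemma B16 u : dot (cross u (ev R (inord 1))) (ev R (inord 6)) = - u 0 (inord 4).
Proof. rewrite dot_ev; crossrw; rewrite ?ev_inord //=; ring. Qed.
Lemma B20 u : dot (cross u (ev R (inord 2))) (ev R (inord 0)) = u 0 (inord 1).
Proof. rewrite dot_ev; crossrw; rewrite ?ev_inord //=; ring. Qed.
Lemma B21 u : dot (cross u (ev R (inord 2))) (ev R (inord 1)) = - u 0 (inord 0).
Proof. rewrite dot_ev; crossrw; rewrite ?ev_inord //=; ring. Qed.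
Lemma B22 u : dot (cross u (ev R (inord 2))) (ev R (inord 2)) = 0.
Proof. rewrite dot_ev; crossrw; rewrite ?ev_inord //=; ring. Qed.
Lemma B23 u : dot (cross u (ev R (inord 2))) (ev R (inord 3)) = u 0 (inord 6).
Proof. rewrite dot_ev; crossrw; rewrite ?ev_inord //=; ring. Qed.
Lemma B24 u : dot (cross u (ev R (inord 2))) (ev R (inord 4)) = - u 0 (inord 5).
Proof. rewrite dot_ev; crossrw; rewrite ?ev_inord //=; ring. Qed.
Lemma B25 u : dot (cross u (ev R (inord 2))) (ev R (inord 5)) = u 0 (inord 4).
Proof. rewrite dot_ev; crossrw; rewrite ?ev_inord //=; ring. Qed.
Lemma B26 u : dot (cross u (ev R (inord 2))) (ev R (inord 6)) = - u 0 (inord 3).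
Proof. rewrite dot_ev; crossrw; rewrite ?ev_inord //=; ring. Qed.
Lemma B30 u : dot (cross u (ev R (inord 3))) (ev R (inord 0)) = - u 0 (inord 4).
Proof. rewrite dot_ev; crossrw; rewrite ?ev_inord //=; ring. Qed.
Lemma B31 u : dot (cross u (ev R (inord 3))) (ev R (inord 1)) = - u 0 (inord 5).
Proof. rewrite dot_ev; crossrw; rewrite ?ev_inord //=; ring. Qed.
Lemma B32 u : dot (cross u (ev R (inord 3))) (ev R (inord 2)) = - u 0 (inord 6).
Proof. rewrite dot_ev; crossrw; rewrite ?ev_inord //=; ring. Qed.
Lemma B33 u : dot (cross u (ev R (inord 3))) (ev R (inord 3)) = 0.
Proof. rewrite dot_ev; crossrw; rewrite ?ev_inord //=; ring. Qed.
Lemma B34 u : dot (cross u (ev R (inord 3))) (ev R (inord 4)) = u 0 (inord 0).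
Proof. rewrite dot_ev; crossrw; rewrite ?ev_inord //=; ring. Qed.
Lemma B35 u : dot (cross u (ev R (inord 3))) (ev R (inord 5)) = u 0 (inord 1).
Proof. rewrite dot_ev; crossrw; rewrite ?ev_inord //=; ring. Qed.
Lemma B36 u : dot (cross u (ev R (inord 3))) (ev R (inord 6)) = u 0 (inord 2).
Proof. rewrite dot_ev; crossrw; rewrite ?ev_inord //=; ring. Qed.
Lemma B40 u : dot (cross u (ev R (inord 4))) (ev R (inord 0)) = u 0 (inord 3).
Proof. rewrite dot_ev; crossrw; rewrite ?ev_inord //=; ring. Qed.
Lemma B41 u : dot (cross u (ev R (inord 4))) (ev R (inord 1)) = - u 0 (inord 6).
Proof. rewrite dot_ev; crossrw; rewrite ?ev_inord //=; ring. Qed.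
Lemma B42 u : dot (cross u (ev R (inord 4))) (ev R (inord 2)) = u 0 (inord 5).
Proof. rewrite dot_ev; crossrw; rewrite ?ev_inord //=; ring. Qed.
Lemma B43 u : dot (cross u (ev R (inord 4))) (ev R (inord 3)) = - u 0 (inord 0).
Proof. rewrite dot_ev; crossrw; rewrite ?ev_inord //=; ring. Qed.
Lemma B44 u : dot (cross u (ev R (inord 4))) (ev R (inord 4)) = 0.
Proof. rewrite dot_ev; crossrw; rewrite ?ev_inord //=; ring. Qed.
Lemma B45 u : dot (cross u (ev R (inord 4))) (ev R (inord 5)) = - u 0 (inord 2).
Proof. rewrite dot_ev; crossrw; rewrite ?ev_inord //=; ring. Qed.
Lemma B46 u : dot (cross u (ev R (inord 4))) (ev R (inord 6)) = u 0 (inord 1).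
Proof. rewrite dot_ev; crossrw; rewrite ?ev_inord //=; ring. Qed.
Lemma B50 u : dot (cross u (ev R (inord 5))) (ev R (inord 0)) = u 0 (inord 6).
Proof. rewrite dot_ev; crossrw; rewrite ?ev_inord //=; ring. Qed.
Lemma B51 u : dot (cross u (ev R (inord 5))) (ev R (inord 1)) = u 0 (inord 3).
Proof. rewrite dot_ev; crossrw; rewrite ?ev_inord //=; ring. Qed.
Lemma B52 u : dot (cross u (ev R (inord 5))) (ev R (inord 2)) = - u 0 (inord 4).
Proof. rewrite dot_ev; crossrw; rewrite ?ev_inord //=; ring. Qed.
Lemma B53 u : dot (cross u (ev R (inord 5))) (ev R (inord 3)) = - u 0 (inord 1).
Proof. rewrite dot_ev; crossrw; rewrite ?ev_inord //=; ring. Qed.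
Lemma B54 u : dot (cross u (ev R (inord 5))) (ev R (inord 4)) = u 0 (inord 2).
Proof. rewrite dot_ev; crossrw; rewrite ?ev_inord //=; ring. Qed.
Lemma B55 u : dot (cross u (ev R (inord 5))) (ev R (inord 5)) = 0.
Proof. rewrite dot_ev; crossrw; rewrite ?ev_inord //=; ring. Qed.
Lemma B56 u : dot (cross u (ev R (inord 5))) (ev R (inord 6)) = - u 0 (inord 0).
Proof. rewrite dot_ev; crossrw; rewrite ?ev_inord //=; ring. Qed.
Lemma B60 u : dot (cross u (ev R (inord 6))) (ev R (inord 0)) = - u 0 (inord 5).
Proof. rewrite dot_ev; crossrw; rewrite ?ev_inord //=; ring. Qed.
Lemma B61 u : dot (cross u (ev R (inord 6))) (ev R (inord 1)) = u 0 (inord 4).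
Proof. rewrite dot_ev; crossrw; rewrite ?ev_inord //=; ring. Qed.
Lemma B62 u : dot (cross u (ev R (inord 6))) (ev R (inord 2)) = u 0 (inord 3).
Proof. rewrite dot_ev; crossrw; rewrite ?ev_inord //=; ring. Qed.
Lemma B63 u : dot (cross u (ev R (inord 6))) (ev R (inord 3)) = - u 0 (inord 2).
Proof. rewrite dot_ev; crossrw; rewrite ?ev_inord //=; ring. Qed.
Lemma B64 u : dot (cross u (ev R (inord 6))) (ev R (inord 4)) = - u 0 (inord 1).
Proof. rewrite dot_ev; crossrw; rewrite ?ev_inord //=; ring. Qed.
Lemma B65 u : dot (cross u (ev R (inord 6))) (ev R (inord 5)) = u 0 (inord 0).
Proof. rewrite dot_ev; crossrw; rewrite ?ev_inord //=; ring. Qed.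
Lemma B66 u : dot (cross u (ev R (inord 6))) (ev R (inord 6)) = 0.
Proof. rewrite dot_ev; crossrw; rewrite ?ev_inord //=; ring. Qed.
Definition Btab := (B00, B01, B02, B03, B04, B05, B06, B10, B11, B12, B13, B14, B15, B16, B20, B21, B22, B23, B24, B25, B26, B30, B31, B32, B33, B34, B35, B36, B40, B41, B42, B43, B44, B45, B46, B50, B51, B52, B53, B54, B55, B56, B60, B61, B62, B63, B64, B65, B66).

Definition Lu (u : vec) := fun x => dot u x.
Definition Bu (u : vec) := fun x y => dot (cross u x) y.
Lemma Lu_lin u a v w : Lu u (a *: v + w) = a * Lu u v + Lu u w.
Proof. by rewrite /Lu dotDr. Qed.
Lemma Bu_lin u a v w y : Bu u (a *: v + w) y = a * Bu u v y + Bu u w y.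
Proof. by rewrite /Bu crossDr dotDl. Qed.
Lemma Bu_sk u x y : Bu u y x = - Bu u x y.
Proof. by rewrite /Bu dot_crossC. Qed.

Lemma Bu_xx u x : Bu u x x = 0.
Proof. by rewrite /Bu P4. Qed.
Lemma row1_ev k : row k (1%:M : 'M[R]_7) = ev R k.
Proof. by rewrite row1. Qed.

Lemma omM1 u : omM (Lu u) (Bu u) 1%:M = - (dot u u) ^+ 2.
Proof.
rewrite /omM !row1_ev /Om /Pf6 /Lu /Bu !Btab !dot_ev dotE.
ring.
Qed.

Lemma det_om (F : 'M[R]_7) u : dot u u = 1 -> omM (Lu u) (Bu u) F = -1 -> \det F = 1.
Proof.
move=> hu hF.
have := @alt_unique _ _ _ (omM_mlin (@Lu_lin u) (@Bu_lin u) (@Bu_sk u)) (omM_alt (Lu u) (@Bu_sk u) (@Bu_xx u)) F.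
rewrite omM1 hu hF expr1n => /eqP; rewrite mulrN1 eqr_opp => /eqP <-.
by [].
Qed.
End DetF.

Section Spec.
Variable R : rcfType.
Local Notation C := (R[i]).
Local Notation toC := (real_complex R).

Lemma conj_real_mx m n (A : 'M[R]_(m, n)) : map_mx (@conjc R) (map_mx toC A) = map_mx toC A.
Proof. by apply/matrixP => i j; rewrite !mxE conjc_real. Qed.

Lemma sym_complex_real n (S : 'M[R]_n) (v : 'rV[C]_n) (z : C) :
  S^T = S -> v != 0 -> v *m map_mx toC S = z *: v -> z = ((complex.Re z)%:C)%C.
Proof.
move=> Ssym vn0 Hv.
set S' := map_mx toC S.
set vb := map_mx (@conjc R) v.
have Hvb : vb *m S' = (conjc z) *: vb.
  have := congr1 (map_mx (@conjc R)) Hv.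
  by rewrite map_mxM map_mxZ conj_real_mx.
have S'sym : S'^T = S'.
  by apply/matrixP => i j; rewrite /S' !mxE -[in LHS]Ssym mxE.
pose N := (v *m vb^T) 0 0.
have NE : (vb *m v^T) 0 0 = N.
  by rewrite /N !mxE; apply: eq_bigr => i _; rewrite !mxE mulrC.
have E1 : (v *m S' *m vb^T) 0 0 = z * N.
  by rewrite Hv -scalemxAl mxE.
have E2 : (v *m S' *m vb^T) 0 0 = (conjc z) * N.
  have -> : (v *m S' *m vb^T) 0 0 = ((v *m S' *m vb^T)^T) 0 0 by rewrite [in RHS]mxE.
  rewrite !trmx_mul trmxK S'sym mulmxA Hvb.
  by rewrite -scalemxAl mxE NE.
have Nn0 : N != 0.
  have ReD : {morph (@complex.Re R) : x y / x + y >-> x + y} by case=> ? ? [] ? ?.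
  have NE2 : complex.Re N = \sum_i ((complex.Re (v 0 i))^+2 + (complex.Im (v 0 i))^+2).
    rewrite /N mxE (big_morph _ ReD (erefl _)); apply: eq_bigr => i _.
    by rewrite !mxE; case: (v 0 i) => a b /=; ring.
  apply: contra vn0 => /eqP N0; apply/eqP/rowP => j; rewrite mxE.
  move: NE2; rewrite N0 /= => /esym/eqP; rewrite psumr_eq0 => [/allP /(_ j (mem_index_enum _))|i _].
    rewrite paddr_eq0 ?sqr_ge0 // !sqrf_eq0 => /andP [].
    by case: (v 0 j) => a b /= /eqP -> /eqP ->.
  by rewrite addr_ge0 ?sqr_ge0.
have zE : z = conjc z.
  by apply: (mulIf Nn0); rewrite -E1 -E2.
case: z zE {E1 E2 Hv Hvb} => a b /= [] /eqP.
rewrite -subr_eq0 opprK -mulr2n mulrn_eq0 /= => /eqP ->.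
by [].
Qed.

Lemma sym_eig_sub n m (S : 'M[R]_n) (W : 'M[R]_(m, n)) :
  S^T = S -> (W *m S <= W)%MS -> W != 0 ->
  exists (a : R) (v : 'rV[R]_n), [/\ v != 0, (v <= W)%MS & v *m S = a *: v].
Proof.
move=> Ssym WS Wn0.
set V := row_base W.
have rV : row_free V := row_base_free W.
have VS : (V *m S <= V)%MS by rewrite (eqmxMr S (eq_row_base W)) eq_row_base.
have r0 : (0 < \rank W)%N by rewrite lt0n mxrank_eq0.
set Sc := conjmx V S.
have ScV : Sc *m V = V *m S by rewrite /Sc /conjmx mulmxKpV.
set Scc := map_mx toC Sc.
have : size (char_poly Scc) != 1%N by rewrite size_char_poly eqSS -lt0n.
move=> /closed_rootP [z rz].
have /eigenvalueP [w Hw wn0] : eigenvalue Scc z by rewrite eigenvalue_root_char.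
have Hv : (w *m map_mx toC V) *m map_mx toC S = z *: (w *m map_mx toC V).
  by rewrite -mulmxA -map_mxM -ScV map_mxM mulmxA Hw scalemxAl.
have vn0 : w *m map_mx toC V != 0 by rewrite mulmx_free_eq0 ?row_free_map.
have zE := sym_complex_real Ssym vn0 Hv.
have : root (char_poly Sc) (complex.Re z).
  by move: rz; rewrite {1}zE /Scc -map_char_poly fmorph_root.
rewrite -eigenvalue_root_char => /eigenvalueP [w0 Hw0 w0n0].
exists (complex.Re z), (w0 *m V); split.
- by rewrite mulmx_free_eq0.
- by rewrite (submx_trans (submxMl _ _)) // eq_row_base.
- by rewrite -mulmxA -ScV mulmxA Hw0 scalemxAl.
Qed.
End Spec.


Lemma rank_from_ker (R : realType) (X : 'M[R]_7) k (Q : 'M[R]_(k,7)) : row_free Q ->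
  (forall x : 'rV_7, x *m X = 0 <-> (x <= Q)%MS) -> \rank X = (7 - k)%N.
Proof.
move=> fQ HQ.
have e : \rank (kermx X) = \rank Q.
  apply: eqmx_rank; apply/andP; split; apply/rV_subP => v.
  - by move/sub_kermxP/HQ.
  - by move/HQ/sub_kermxP.
move: e; rewrite mxrank_ker (eqP fQ) => e.
by rewrite -e subKn // rank_leq_row.
Qed.

Section Frame.
Variable R : realType.
Notation vec := 'rV[R]_7.
Variables (X : 'M[R]_7) (a b c : vec) (mu nu : R).
Hypothesis HX : in_g2 X.
Hypotheses (ha : dot a a = 1) (hb : dot b b = 1) (hc : dot c c = 1) (hab : dot a b = 0)
  (hac : dot a c = 0) (hbc : dot b c = 0) (habc : dot (cross a b) c = 0).
Hypotheses (Xa : a *m X = 0) (Xb : b *m X = - mu *: cross a b) (Xc : c *m X = - nu *: cross a c).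

Opaque cross dot.
Let hba : dot b a = 0. Proof. by rewrite dotC. Qed.
Let hca : dot c a = 0. Proof. by rewrite dotC. Qed.
Let hcb : dot c b = 0. Proof. by rewrite dotC. Qed.
Let hcab : dot c (cross a b) = 0. Proof. by rewrite dotC. Qed.
Let tp1 : dot a (cross b c) = 0. Proof. by rewrite dotC dot_cross_cyc dot_cross_cyc. Qed.
Let tp2 : dot b (cross a c) = 0. Proof. by rewrite dotC dot_crossC habc oppr0. Qed.
Let tp3 : dot (cross b c) a = 0. Proof. by rewrite dotC tp1. Qed.
Let tp4 : dot (cross a c) b = 0. Proof. by rewrite dotC tp2. Qed.
Let cab : dot (cross a b) (cross a b) = 1. Proof. by rewrite CC1 ha hb hab; ring. Qed.

Lemma d11 : dot a a = 1.
Proof. exact: ha. Qed.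
Lemma d12 : dot a b = 0.
Proof. exact: hab. Qed.
Lemma d13 : dot a (cross a b) = 0.
Proof. exact: P1. Qed.
Lemma d14 : dot a c = 0.
Proof. exact: hac. Qed.
Lemma d15 : dot a (cross a c) = 0.
Proof. exact: P1. Qed.
Lemma d16 : dot a (cross b c) = 0.
Proof. exact: tp1. Qed.
Lemma d17 : dot a (cross (cross a b) c) = 0.
Proof. by rewrite dotC dot_cross_cyc CC4 hcb hac; ring. Qed.
Lemma d22 : dot b b = 1.
Proof. exact: hb. Qed.
Lemma d23 : dot b (cross a b) = 0.
Proof. exact: P2. Qed.
Lemma d24 : dot b c = 0.
Proof. exact: hbc. Qed.
Lemma d25 : dot b (cross a c) = 0.
Proof. exact: tp2. Qed.
Lemma d26 : dot b (cross b c) = 0.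
Proof. exact: P1. Qed.
Lemma d27 : dot b (cross (cross a b) c) = 0.
Proof. by rewrite dotC dot_cross_cyc CC2 hca hbc hba; ring. Qed.
Lemma d33 : dot (cross a b) (cross a b) = 1.
Proof. exact: cab. Qed.
Lemma d34 : dot (cross a b) c = 0.
Proof. exact: habc. Qed.
Lemma d35 : dot (cross a b) (cross a c) = 0.
Proof. by rewrite CC1 ha hbc hab; ring. Qed.
Lemma d36 : dot (cross a b) (cross b c) = 0.
Proof. by rewrite CC4 hb hac hba; ring. Qed.
Lemma d37 : dot (cross a b) (cross (cross a b) c) = 0.
Proof. exact: P1. Qed.
Lemma d44 : dot c c = 1.
Proof. exact: hc. Qed.
Lemma d45 : dot c (cross a c) = 0.
Proof. exact: P2. Qed.
Lemma d46 : dot c (cross b c) = 0.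
Proof. exact: P2. Qed.
Lemma d47 : dot c (cross (cross a b) c) = 0.
Proof. exact: P2. Qed.
Lemma d55 : dot (cross a c) (cross a c) = 1.
Proof. by rewrite CC1 ha hc hac; ring. Qed.
Lemma d56 : dot (cross a c) (cross b c) = 0.
Proof. by rewrite CC2 hc hab hca; ring. Qed.
Lemma d57 : dot (cross a c) (cross (cross a b) c) = 0.
Proof. by rewrite CC2 P1 hcab; ring. Qed.
Lemma d66 : dot (cross b c) (cross b c) = 1.
Proof. by rewrite CC1 hb hc hbc; ring. Qed.
Lemma d67 : dot (cross b c) (cross (cross a b) c) = 0.
Proof. by rewrite CC2 P2 hcab; ring. Qed.
Lemma d77 : dot (cross (cross a b) c) (cross (cross a b) c) = 1.
Proof. by rewrite CC2 hc cab hcab; ring. Qed.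
Lemma d21 : dot b a = 0.
Proof. by rewrite dotC d12. Qed.
Lemma d31 : dot (cross a b) a = 0.
Proof. by rewrite dotC d13. Qed.
Lemma d32 : dot (cross a b) b = 0.
Proof. by rewrite dotC d23. Qed.
Lemma d41 : dot c a = 0.
Proof. by rewrite dotC d14. Qed.
Lemma d42 : dot c b = 0.
Proof. by rewrite dotC d24. Qed.
Lemma d43 : dot c (cross a b) = 0.
Proof. by rewrite dotC d34. Qed.
Lemma d51 : dot (cross a c) a = 0.
Proof. by rewrite dotC d15. Qed.
Lemma d52 : dot (cross a c) b = 0.
Proof. by rewrite dotC d25. Qed.
Lemma d53 : dot (cross a c) (cross a b) = 0.
Proof. by rewrite dotC d35. Qed.
Lemma d54 : dot (cross a c) c = 0.
Proof. by rewrite dotC d45. Qed.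
Lemma d61 : dot (cross b c) a = 0.
Proof. by rewrite dotC d16. Qed.
Lemma d62 : dot (cross b c) b = 0.
Proof. by rewrite dotC d26. Qed.
Lemma d63 : dot (cross b c) (cross a b) = 0.
Proof. by rewrite dotC d36. Qed.
Lemma d64 : dot (cross b c) c = 0.
Proof. by rewrite dotC d46. Qed.
Lemma d65 : dot (cross b c) (cross a c) = 0.
Proof. by rewrite dotC d56. Qed.
Lemma d71 : dot (cross (cross a b) c) a = 0.
Proof. by rewrite dotC d17. Qed.
Lemma d72 : dot (cross (cross a b) c) b = 0.
Proof. by rewrite dotC d27. Qed.
Lemma d73 : dot (cross (cross a b) c) (cross a b) = 0.
Proof. by rewrite dotC d37. Qed.
Lemma d74 : dot (cross (cross a b) c) c = 0.
Proof. by rewrite dotC d47. Qed.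
Lemma d75 : dot (cross (cross a b) c) (cross a c) = 0.
Proof. by rewrite dotC d57. Qed.
Lemma d76 : dot (cross (cross a b) c) (cross b c) = 0.
Proof. by rewrite dotC d67. Qed.
Definition dtab := (d11, d12, d13, d14, d15, d16, d17, d21, d22, d23, d24, d25, d26, d27, d31, d32, d33, d34, d35, d36, d37, d41, d42, d43, d44, d45, d46, d47, d51, d52, d53, d54, d55, d56, d57, d61, d62, d63, d64, d65, d66, d67, d71, d72, d73, d74, d75, d76, d77).

Let D := HX.2.
Lemma x3 : cross a b *m X = mu *: b.
Proof.
rewrite D Xa Xb cross0l add0r crossZr cross_cross_same hab ha scale0r sub0r scale1r.
by rewrite scalerN scaleNr opprK.
Qed.
Lemma x5 : cross a c *m X = nu *: c.
Proof.
rewrite D Xa Xc cross0l add0r crossZr cross_cross_same hac ha scale0r sub0r scale1r.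
by rewrite scalerN scaleNr opprK.
Qed.
Lemma bac : cross b (cross a c) = cross (cross a b) c.
Proof.
have := cross_assoc b a c; rewrite hbc hba hac mulr0 !scale0r !subr0 (crossC a b) crossNl.
by move/eqP; rewrite subr_eq0 => /eqP.
Qed.
Lemma x6 : cross b c *m X = - (mu + nu) *: cross (cross a b) c.
Proof.
by rewrite D Xb Xc crossZl crossZr bac -scalerDl opprD.
Qed.
Lemma aba : cross (cross a b) a = b.
Proof. by rewrite (crossC a) cross_cross_same hab ha scale0r sub0r scale1r opprK. Qed.
Lemma abac : cross (cross a b) (cross a c) = - cross b c.
Proof.
have := cross_assoc (cross a b) a c; rewrite habc P3 hac mulr0 !scale0r !subr0 aba.
by move/eqP; rewrite addr_eq0 => /eqP.
Qed.
Lemma x7 : cross (cross a b) c *m X = (mu + nu) *: cross b c.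
Proof.
rewrite D x3 Xc crossZl crossZr abac scalerN scaleNr opprK. by rewrite scalerDl.
Qed.

Lemma ca3 : cross a (cross a b) = - b.
Proof. by rewrite cross_cross_same hab ha scale0r sub0r scale1r. Qed.
Lemma ca5 : cross a (cross a c) = - c.
Proof. by rewrite cross_cross_same hac ha scale0r sub0r scale1r. Qed.
Lemma ca6 : cross a (cross b c) = - cross (cross a b) c.
Proof.
have := cross_assoc a b c; rewrite hac hab hbc mulr0 !scale0r !subr0.
by move/eqP; rewrite addr_eq0 => /eqP.
Qed.
Lemma ca7 : cross a (cross (cross a b) c) = cross b c.
Proof.
have := cross_assoc a (cross a b) c; rewrite hac P1 habc mulr0 !scale0r !subr0 ca3 crossNl.
by move/eqP; rewrite subr_eq0 => /eqP.
Qed.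

Definition fs := [:: a; b; cross a b; c; cross a c; cross b c; cross (cross a b) c].
Definition mkF : 'M[R]_7 := \matrix_(i < 7) nth 0 fs i.
Lemma rowF (i : 'I_7) : row i mkF = nth 0 fs i.
Proof. by rewrite rowK. Qed.
Lemma rF k : (k < 7)%N -> row (inord k) mkF = nth 0 fs k.
Proof. by move=> hk; rewrite rowF inordK. Qed.

Lemma F_orth (i j : 'I_7) : dot (row i mkF) (row j mkF) = (i == j)%:R.
Proof.
rewrite !rowF.
case: i => [[|[|[|[|[|[|[|i]]]]]]] hi] //; case: j => [[|[|[|[|[|[|[|j]]]]]]] hj] //;
  by rewrite /= dtab.
Qed.

Lemma detF : \det mkF = 1.
Proof.
apply: (@det_om _ _ a ha).
rewrite /omM !rF // /= /Om /Pf6 /Lu /Bu ?crossxx ?ca3 ?ca5 ?ca6 ?ca7 ?dotNl ?dot0l ?dotNr ?dtab.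
ring.
Qed.

Lemma F_adapted : G2_adapted mkF.
Proof.
split.
- exact: F_orth.
- by rewrite detF ltr01.
- by rewrite /= !rF.
Qed.

Transparent dot.
Lemma bformE (M : 'M[R]_7) u v : bform M u v = dot (u *m M) v.
Proof. by rewrite /bform /dot mxE; apply: eq_bigr => k _; rewrite !mxE. Qed.
Lemma dot_mxE (x y : vec) : (x *m y^T) 0 0 = dot x y.
Proof. by rewrite mxE /dot; apply: eq_bigr => k _; rewrite !mxE. Qed.
Opaque dot.

Definition xtab := (Xa, Xb, x3, Xc, x5, x6, x7).

Lemma F_normal : (\matrix_(i < 7, j < 7) bform X (row i mkF) (row j mkF)) = normal_form mu nu (nu + mu).
Proof.
apply/matrixP => i j; rewrite !mxE bformE !rowF.
case: i => [[|[|[|[|[|[|[|i]]]]]]] hi] //; case: j => [[|[|[|[|[|[|[|j]]]]]]] hj] //;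
  rewrite /= xtab ?dotZl ?dotNl ?dot0l ?dtab; ring.
Qed.

Lemma FFt : mkF *m mkF^T = 1%:M.
Proof.
apply/matrixP => i j; rewrite !mxE -F_orth -dot_mxE mxE.
by apply: eq_bigr => k _; rewrite !mxE.
Qed.

Lemma FtF : mkF^T *m mkF = 1%:M.
Proof. exact: mulmx1C FFt. Qed.

Lemma expand x : x = dot x a *: a + dot x b *: b + dot x (cross a b) *: cross a b
  + dot x c *: c + dot x (cross a c) *: cross a c + dot x (cross b c) *: cross b c
  + dot x (cross (cross a b) c) *: cross (cross a b) c.
Proof.
have Ex : x = (x *m mkF^T) *m mkF by rewrite -mulmxA FtF mulmx1.
have E i : (x *m mkF^T) 0 i = dot x (row i mkF).
  by rewrite -dot_mxE !mxE; apply: eq_bigr => k _; rewrite !mxE.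
rewrite {1}Ex mulmx_sum_row !big_ord_recl big_ord0 addr0 !E !rowF /=.
by rewrite !addrA.
Qed.

Ltac vring := apply: vec7P; repeat rewrite (vaddE, vscaleE, voppE, v0E, cross0, cross1, cross2, cross3, cross4, cross5, cross6); ring.

Lemma xX x : x *m X = (- mu * dot x b) *: cross a b + (mu * dot x (cross a b)) *: b
  + (- nu * dot x c) *: cross a c + (nu * dot x (cross a c)) *: c
  + (- (mu + nu) * dot x (cross b c)) *: cross (cross a b) c
  + ((mu + nu) * dot x (cross (cross a b) c)) *: cross b c.
Proof.
rewrite {1}(expand x) !mulmxDl -!scalemxAl !xtab.
vring.
Qed.

Lemma ker_coef x : x *m X = 0 ->
  mu * dot x b = 0 /\ mu * dot x (cross a b) = 0 /\ nu * dot x c = 0 /\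
      nu * dot x (cross a c) = 0 /\ (mu + nu) * dot x (cross b c) = 0 /\
      (mu + nu) * dot x (cross (cross a b) c) = 0.
Proof.
move=> h; have e := xX x; rewrite h in e.
have := congr1 (fun v => dot v (cross a b)) e; have := congr1 (fun v => dot v b) e.
have := congr1 (fun v => dot v (cross a c)) e; have := congr1 (fun v => dot v c) e.
have := congr1 (fun v => dot v (cross (cross a b) c)) e; have := congr1 (fun v => dot v (cross b c)) e.
rewrite /= !dot0l !dotDl1 !dotZl !dtab.
move=> e1 e2 e3 e4 e5 e6; do !split; lra.
Qed.

Lemma anz : a != 0.
Proof. by apply/eqP => a0; move: ha; rewrite a0 dot0l => /eqP; rewrite eq_sym oner_eq0. Qed.

Lemma ker_ii (hmu : mu = 0) (hnu : 0 < nu) x : x *m X = 0 <-> span3 a b (cross a b) x.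
Proof.
split.
- move/ker_coef => [_ [_ [e3 [e4 [e5 e6]]]]].
  rewrite hmu add0r in e5 e6.
  have nu0 : nu != 0 by rewrite gt_eqF.
  move/eqP: e3; rewrite mulf_eq0 (negPf nu0) /= => /eqP z3.
  move/eqP: e4; rewrite mulf_eq0 (negPf nu0) /= => /eqP z4.
  move/eqP: e5; rewrite mulf_eq0 (negPf nu0) /= => /eqP z5.
  move/eqP: e6; rewrite mulf_eq0 (negPf nu0) /= => /eqP z6.
  exists (dot x a), (dot x b), (dot x (cross a b)).
  by rewrite {1}(expand x) z3 z4 z5 z6 !scale0r !addr0.
- case=> [c1 [c2 [c3 ->]]].
  by rewrite !mulmxDl -!scalemxAl Xa Xb x3 hmu oppr0 !scale0r !scaler0 !addr0.
Qed.

Lemma ker_iii (hmu : 0 < mu) (hnu : 0 < nu) x : x *m X = 0 <-> span1 a x.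
Proof.
split.
- move/ker_coef => [e1 [e2 [e3 [e4 [e5 e6]]]]].
  have nu0 : nu != 0 by rewrite gt_eqF.
  have mu0 : mu != 0 by rewrite gt_eqF.
  have mn0 : mu + nu != 0 by rewrite gt_eqF // addr_gt0.
  move/eqP: e1; rewrite mulf_eq0 (negPf mu0) /= => /eqP z1.
  move/eqP: e2; rewrite mulf_eq0 (negPf mu0) /= => /eqP z2.
  move/eqP: e3; rewrite mulf_eq0 (negPf nu0) /= => /eqP z3.
  move/eqP: e4; rewrite mulf_eq0 (negPf nu0) /= => /eqP z4.
  move/eqP: e5; rewrite mulf_eq0 (negPf mn0) /= => /eqP z5.
  move/eqP: e6; rewrite mulf_eq0 (negPf mn0) /= => /eqP z6.
  exists (dot x a).
  by rewrite {1}(expand x) z1 z2 z3 z4 z5 z6 !scale0r !addr0.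
- case=> [c1 ->].
  by rewrite -scalemxAl Xa scaler0.
Qed.

Definition Q3 : 'M[R]_(3, 7) := \matrix_(i < 3) nth 0 [:: a; b; cross a b] i.

Transparent dot.
Lemma mulmxtE m (A : 'M[R]_(m, 7)) i j : (A *m A^T) i j = dot (row i A) (row j A).
Proof. by rewrite mxE /dot; apply: eq_bigr => k _; rewrite !mxE. Qed.
Opaque dot.

Lemma Q3_free : row_free Q3.
Proof.
apply/row_freeP; exists Q3^T; apply/matrixP => i j; rewrite mulmxtE !rowK !mxE.
case: i => [[|[|[|i]]] hi] //; case: j => [[|[|[|j]]] hj] //; by rewrite /= dtab.
Qed.

Lemma Q3_sub x : (x <= Q3)%MS <-> span3 a b (cross a b) x.
Proof.
split.
- case/submxP => Dm ->; rewrite mulmx_sum_row !big_ord_recl big_ord0 addr0 !rowK /=.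
  by exists (Dm 0 ord0), (Dm 0 (lift ord0 ord0)), (Dm 0 (lift ord0 (lift ord0 ord0))); rewrite !addrA.
- case=> [c1 [c2 [c3 ->]]]; apply/submxP.
  exists (\row_(i < 3) nth 0 [:: c1; c2; c3] i).
  by rewrite mulmx_sum_row !big_ord_recl big_ord0 addr0 !rowK !mxE /= !addrA.
Qed.

Lemma a_free : row_free a.
Proof. by rewrite /row_free rank_rV anz. Qed.

Lemma tb1 : cross b a = - cross a b. Proof. exact: crossC. Qed.
Lemma tb2 : cross b (cross a b) = a.
Proof. by rewrite (crossC b a) crossNr cross_cross_same hba hb scale0r sub0r scale1r opprK. Qed.
Lemma tb3 : cross (cross a b) b = - a.
Proof. by rewrite (crossC b (cross a b)) tb2. Qed.

Lemma cross_span3 u v : span3 a b (cross a b) u -> span3 a b (cross a b) v ->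
  span3 a b (cross a b) (cross u v).
Proof.
move=> [c1 [c2 [c3 ->]]] [d1 [d2 [d3 ->]]].
exists (c2 * d3 - c3 * d2), (c3 * d1 - c1 * d3), (c1 * d2 - c2 * d1).
rewrite !(crossDl1, crossDr1, crossZl, crossZr) !crossxx tb1 tb2 tb3 aba ca3.
vring.
Qed.

Lemma X0 (hmu : mu = 0) (hnu : nu = 0) : X = 0.
Proof.
apply/row_matrixP => i; rewrite rowE row0 xX hmu hnu.
by rewrite !(oppr0, mul0r, addr0, scale0r).
Qed.

Lemma conclusion (h0 : 0 <= mu) (h1 : mu <= nu) :
  exists (F : 'M[R]_7) (lam nu' mu' : R),
    let f (n : nat) : 'rV[R]_7 := row (inord n.-1) F in
    G2_adapted F /\
    [/\ lam >= nu' /\ nu' >= mu' /\ mu' >= 0 /\ lam = nu' + mu',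
        (\matrix_(i < 7, j < 7) bform X (row i F) (row j F)) = normal_form mu' nu' lam,
        [\/ lam = mu', 0 < lam /\ mu' = 0 | mu' < lam /\ 0 < mu'] &
      [/\
        lam = mu' -> lam = 0 /\ mu' = 0 /\ nu' = 0 /\ X = 0,
        0 < lam /\ mu' = 0 ->
          [/\ lam = nu', \rank X = 4%N,
              (forall x, kerX X x <-> span3 (f 1%N) (f 2%N) (f 3%N) x) &
              associative_set (span3 (f 1%N) (f 2%N) (f 3%N))] &
        mu' < lam /\ 0 < mu' ->
          \rank X = 6%N /\ (forall x, kerX X x <-> span1 (f 1%N) x)]].
Proof.
exists mkF, (nu + mu), nu, mu => f.
have f1 : f 1%N = a by rewrite /f rF.
have f2 : f 2%N = b by rewrite /f rF.
have f3 : f 3%N = cross a b by rewrite /f rF.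
rewrite f1 f2 f3.
have nu0 : 0 <= nu := le_trans h0 h1.
split; first exact: F_adapted.
split.
- by do !split => //; rewrite ?lerDl //.
- exact: F_normal.
- case: (ltrgt0P mu) h0 => // [mup|mu0] _.
    by apply: Or33; split => //; rewrite ltrDr; apply: lt_le_trans h1.
  case: (ltrgt0P nu) nu0 => // [nup|nu00] _.
    by apply: Or32; rewrite mu0 addr0.
  by apply: Or31; rewrite mu0 nu00 addr0.
split.
- move=> e; have hnu : nu = 0 by lra.
  have hmu : mu = 0 by lra.
  by rewrite hmu hnu addr0; do !split => //; apply: X0.
- move=> [lp hmu]; rewrite hmu addr0 in lp *.
  split => //.
  + apply: (rank_from_ker Q3_free) => x; rewrite Q3_sub; exact: ker_ii.
  + by move=> x; rewrite /kerX; apply: ker_ii.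
  + move=> u v; exact: cross_span3.
- move=> [lt mup]; have nup : 0 < nu := lt_le_trans mup h1.
  split.
  + apply: (rank_from_ker a_free) => x.
    rewrite ker_iii //; split; [by move/sub_rVP | by move=> h; apply/sub_rVP].
  + by move=> x; rewrite /kerX; apply: ker_iii.
Qed.
End Frame.

Transparent cross dot.

Section Main.
Variable R : realType.
Notation vec := 'rV[R]_7.
Variable X : 'M[R]_7.
Hypothesis HX : in_g2 X.
Implicit Types u v w : vec.

Lemma skew_dot u v : dot u (v *m X) = - dot (u *m X) v.
Proof.
by rewrite -!dot_mxE trmx_mul HX.1 mulNmx mulmxN mulmxA [LHS]mxE.
Qed.

Lemma dot_ge0 v : 0 <= dot v v.
Proof. by rewrite dotE; rewrite -!expr2; do 6 (apply: addr_ge0; last exact: sqr_ge0); exact: sqr_ge0. Qed.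

Lemma dot_eq0 v : dot v v = 0 -> v = 0.
Proof.
rewrite dotE -!expr2 => h.
have s0 k : 0 <= v 0 (inord k) ^+ 2 by exact: sqr_ge0.
have z : forall k, (k < 7)%N -> v 0 (inord k) = 0.
  move=> k hk; apply/eqP; rewrite -sqrf_eq0 eq_le sqr_ge0 andbT.
  have := s0 0%N; have := s0 1%N; have := s0 2%N; have := s0 3%N; have := s0 4%N; have := s0 5%N; have := s0 6%N.
  case: k hk => [|[|[|[|[|[|[|k]]]]]]] hk //= *; lra.
by apply: vec7P; rewrite v0E z.
Qed.

Lemma normalize v : v != 0 -> exists k : R, dot (k *: v) (k *: v) = 1.
Proof.
move=> vn0; have d0 : 0 < dot v v.
  rewrite lt_def dot_ge0 andbT; apply/eqP => /dot_eq0 v0; by rewrite v0 eqxx in vn0.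
exists (Num.sqrt (dot v v))^-1.
rewrite dotZl dotZr mulrA -expr2 exprVn sqr_sqrtr ?dot_ge0 //.
by rewrite mulVf // gt_eqF.
Qed.

Lemma detX0 : \det X = 0.
Proof.
have e := det_tr X; rewrite HX.1 -[- X]scaleN1r detZ in e.
have m7 : (-1 : R) ^+ 7 = -1 by ring.
rewrite m7 mulN1r in e; lra.
Qed.

Lemma kernel_unit : exists a : vec, dot a a = 1 /\ a *m X = 0.
Proof.
have /det0P [v vn0 vX] : \det X == 0 by rewrite detX0.
have [k hk] := normalize vn0.
by exists (k *: v); split => //; rewrite -scalemxAl vX scaler0.
Qed.

Definition Ja (a : vec) : 'M[R]_7 := \matrix_(i < 7) cross a (ev R i).

Lemma Ja_mul a v : v *m Ja a = cross a v.
Proof.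
rewrite mulmx_sum_row {2}[v]row_sum_delta.
have -> : \sum_(i < 7) v 0 i *: row i (Ja a) = \sum_(i < 7) v 0 i *: cross a (ev R i).
  by apply: eq_bigr => i _; rewrite rowK.
symmetry; apply: (big_rec2 (fun (t s : vec) => cross a s = t)) => [|i s t _ <-].
  exact: cross0r.
by rewrite crossDr.
Qed.

Lemma JaE a i j : Ja a i j = dot (cross a (ev R i)) (ev R j).
Proof.
rewrite dot_ev; have := rowK (fun k => cross a (ev R k)) i.
by rewrite -/(Ja a) => <-; rewrite [RHS]mxE.
Qed.

Lemma Ja_skew a : (Ja a)^T = - Ja a.
Proof.
apply/matrixP => i j; rewrite [LHS]mxE [RHS]mxE !JaE.
by rewrite dot_crossC.
Qed.

Lemma JaX a : a *m X = 0 -> Ja a *m X = X *m Ja a.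
Proof.
move=> aX; apply/row_matrixP => i; rewrite !row_mul rowK Ja_mul HX.2 aX cross0l add0r.
by rewrite rowE.
Qed.

Lemma S_sym a : a *m X = 0 -> (X *m Ja a)^T = X *m Ja a.
Proof. by move=> aX; rewrite trmx_mul Ja_skew HX.1 mulmxN mulNmx opprK JaX. Qed.

Lemma S_mul a v : v *m (X *m Ja a) = cross a (v *m X).
Proof. by rewrite mulmxA Ja_mul. Qed.

Lemma eig_X a v c : dot a a = 1 -> a *m X = 0 -> dot a v = 0 ->
  v *m (X *m Ja a) = c *: v -> v *m X = - c *: cross a v.
Proof.
move=> ha aX av; rewrite S_mul => e.
have := congr1 (cross a) e; rewrite cross_cross_same ha scale1r skew_dot aX dot0l oppr0 scale0r sub0r crossZr.
by move=> e2; rewrite -[v *m X]opprK e2 scaleNr.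
Qed.

Lemma mulmxt0 (v w : vec) : v *m w^T = 0 <-> dot v w = 0.
Proof.
split => h; first by rewrite -dot_mxE h mxE.
by apply/matrixP => i j; rewrite !ord1 dot_mxE h mxE.
Qed.

Lemma scale_eig a v c k : v *m X = - c *: cross a v -> (k *: v) *m X = - c *: cross a (k *: v).
Proof. by move=> e; rewrite -scalemxAl e crossZr !scalerA mulrC. Qed.

Lemma first_eig a : dot a a = 1 -> a *m X = 0 ->
  exists (g : vec) (c : R), [/\ dot g g = 1, dot a g = 0 & g *m X = - c *: cross a g].
Proof.
move=> ha aX.
set S := X *m Ja a.
set W := kermx a^T.
have memW v : (v <= W)%MS <-> dot v a = 0.
  by split => [/sub_kermxP/mulmxt0 //| /mulmxt0 h]; apply/sub_kermxP.
have Sa : S *m a^T = 0.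
  apply/row_matrixP => i; rewrite row0 row_mul /S row_mul Ja_mul; apply/mulmxt0.
  exact: P3.
have stab : (W *m S <= W)%MS by apply/sub_kermxP; rewrite -mulmxA Sa mulmx0.
have Wn0 : W != 0.
  apply/eqP => W0; have := mxrank_ker a^T; rewrite -/W W0 mxrank0.
  have := rank_leq_col a^T; lia.
have [c [v [vn0 vW vS]]] := sym_eig_sub (S_sym aX) stab Wn0.
have av : dot a v = 0 by rewrite dotC; apply/memW.
have vX := eig_X ha aX av vS.
have [k hk] := normalize vn0.
exists (k *: v), c; split => //.
- by rewrite dotZr av mulr0.
- exact: scale_eig.
Qed.

Lemma cross_ag_X a g c : a *m X = 0 -> dot a a = 1 -> dot a g = 0 -> g *m X = - c *: cross a g ->
  cross a g *m X = c *: g.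
Proof.
move=> aX ha ag gX; rewrite HX.2 aX cross0l add0r gX crossZr cross_cross_same ag ha.
by rewrite scale0r sub0r scale1r scalerN scaleNr opprK.
Qed.

Lemma second_eig a g c1 : dot a a = 1 -> a *m X = 0 -> dot g g = 1 -> dot a g = 0 ->
  g *m X = - c1 *: cross a g ->
  exists (h : vec) (c : R), [/\ dot h h = 1, dot a h = 0, dot g h = 0,
     dot (cross a g) h = 0 & h *m X = - c *: cross a h].
Proof.
move=> ha aX hg ag gX.
set S := X *m Ja a.
set P := row_mx (row_mx a^T g^T) (cross a g)^T.
set W := kermx P.
have memW v : (v <= W)%MS <-> [/\ dot v a = 0, dot v g = 0 & dot v (cross a g) = 0].
  split.
  - move/sub_kermxP/eqP; rewrite !mul_mx_row !row_mx_eq0 => /andP [/andP [/eqP h1 /eqP h2] /eqP h3].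
    by split; apply/mulmxt0.
  - case=> h1 h2 h3; apply/sub_kermxP; rewrite !mul_mx_row.
    by move/mulmxt0: h1 => ->; move/mulmxt0: h2 => ->; move/mulmxt0: h3 => ->; rewrite !row_mx0.
have agX := cross_ag_X aX ha ag gX.
have stab : (W *m S <= W)%MS.
  apply/row_subP => i; rewrite row_mul.
  have := row_sub i W; move: (row i W) => w /memW [w1 w2 w3].
  apply/memW; rewrite /S S_mul; split.
  - exact: P3.
  - by rewrite dot_crossC skew_dot opprK agX dotZl dotC w2 mulr0.
  - by rewrite CC1 ha mul1r ag mulr0 subr0 dotC skew_dot gX dotZl dotC w3; ring.
have Wn0 : W != 0.
  apply/eqP => W0; have := mxrank_ker P; rewrite -/W W0 mxrank0.
  have := rank_leq_col P; lia.
have [c [v [vn0 vW vS]]] := sym_eig_sub (S_sym aX) stab Wn0.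
have [va vg vag] := (memW v).1 vW.
have av : dot a v = 0 by rewrite dotC.
have vX := eig_X ha aX av vS.
have [k hk] := normalize vn0.
exists (k *: v), c; split => //.
- by rewrite dotZr av mulr0.
- by rewrite dotZr dotC vg mulr0.
- by rewrite dotZr dotC vag mulr0.
- exact: scale_eig.
Qed.

Lemma pick (a p q : vec) (mp mq : R) : dot a a = 1 -> dot p p = 1 -> dot q q = 1 ->
  dot a p = 0 -> dot a q = 0 -> dot p q = 0 -> dot (cross a p) q = 0 -> a *m X = 0 ->
  p *m X = - mp *: cross a p -> q *m X = - mq *: cross a q -> 0 <= mp -> mp <= mq ->
  exists (F : 'M[R]_7) (lam nu mu : R),
    let f (n : nat) : 'rV[R]_7 := row (inord n.-1) F in
    G2_adapted F /\
    [/\ lam >= nu /\ nu >= mu /\ mu >= 0 /\ lam = nu + mu,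
        (\matrix_(i < 7, j < 7) bform X (row i F) (row j F)) = normal_form mu nu lam,
        [\/ lam = mu, 0 < lam /\ mu = 0 | mu < lam /\ 0 < mu] &
      [/\
        lam = mu -> lam = 0 /\ mu = 0 /\ nu = 0 /\ X = 0,
        0 < lam /\ mu = 0 ->
          [/\ lam = nu, \rank X = 4%N,
              (forall x, kerX X x <-> span3 (f 1%N) (f 2%N) (f 3%N) x) &
              associative_set (span3 (f 1%N) (f 2%N) (f 3%N))] &
        mu < lam /\ 0 < mu ->
          \rank X = 6%N /\ (forall x, kerX X x <-> span1 (f 1%N) x)]].
Proof.
move=> ha hp hq ap aq pq apq aX pX qX h0 h1.
exact: (conclusion HX ha hp hq ap aq pq apq aX pX qX h0 h1).
Qed.

Lemma pickN (a p q : vec) (mp mq : R) : dot a a = 1 -> dot p p = 1 -> dot q q = 1 ->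
  dot a p = 0 -> dot a q = 0 -> dot p q = 0 -> dot (cross a p) q = 0 -> a *m X = 0 ->
  p *m X = - mp *: cross a p -> q *m X = - mq *: cross a q -> 0 <= - mp -> - mp <= - mq ->
  exists (F : 'M[R]_7) (lam nu mu : R),
    let f (n : nat) : 'rV[R]_7 := row (inord n.-1) F in
    G2_adapted F /\
    [/\ lam >= nu /\ nu >= mu /\ mu >= 0 /\ lam = nu + mu,
        (\matrix_(i < 7, j < 7) bform X (row i F) (row j F)) = normal_form mu nu lam,
        [\/ lam = mu, 0 < lam /\ mu = 0 | mu < lam /\ 0 < mu] &
      [/\
        lam = mu -> lam = 0 /\ mu = 0 /\ nu = 0 /\ X = 0,
        0 < lam /\ mu = 0 ->
          [/\ lam = nu, \rank X = 4%N,
              (forall x, kerX X x <-> span3 (f 1%N) (f 2%N) (f 3%N) x) &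
              associative_set (span3 (f 1%N) (f 2%N) (f 3%N))] &
        mu < lam /\ 0 < mu ->
          \rank X = 6%N /\ (forall x, kerX X x <-> span1 (f 1%N) x)]].
Proof.
move=> ha hp hq ap aq pq apq aX pX qX h0 h1.
have ha' : dot (- a) (- a) = 1 by rewrite dotNl dotNr opprK.
have ap' : dot (- a) p = 0 by rewrite dotNl ap oppr0.
have aq' : dot (- a) q = 0 by rewrite dotNl aq oppr0.
have apq' : dot (cross (- a) p) q = 0 by rewrite crossNl dotNl apq oppr0.
have aX' : (- a) *m X = 0 by rewrite mulNmx aX oppr0.
have pX' : p *m X = - (- mp) *: cross (- a) p by rewrite pX crossNl scalerN scaleNr opprK.
have qX' : q *m X = - (- mq) *: cross (- a) q by rewrite qX crossNl scalerN scaleNr opprK.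
exact: (pick ha' hp hq ap' aq' pq apq' aX' pX' qX' h0 h1).
Qed.

Lemma final : exists (F : 'M[R]_7) (lam nu mu : R),
    let f (n : nat) : 'rV[R]_7 := row (inord n.-1) F in
    G2_adapted F /\
    [/\ lam >= nu /\ nu >= mu /\ mu >= 0 /\ lam = nu + mu,
        (\matrix_(i < 7, j < 7) bform X (row i F) (row j F)) = normal_form mu nu lam,
        [\/ lam = mu, 0 < lam /\ mu = 0 | mu < lam /\ 0 < mu] &
      [/\
        lam = mu -> lam = 0 /\ mu = 0 /\ nu = 0 /\ X = 0,
        0 < lam /\ mu = 0 ->
          [/\ lam = nu, \rank X = 4%N,
              (forall x, kerX X x <-> span3 (f 1%N) (f 2%N) (f 3%N) x) &
              associative_set (span3 (f 1%N) (f 2%N) (f 3%N))] &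
        mu < lam /\ 0 < mu ->
          \rank X = 6%N /\ (forall x, kerX X x <-> span1 (f 1%N) x)]].
Proof.
have [a [ha aX]] := kernel_unit.
have [g [c1 [hg ag gX]]] := first_eig ha aX.
have [h [c2 [hh ah gh agh hX]]] := second_eig ha aX hg ag gX.
set k := cross g h.
have hk : dot k k = 1 := d66 hg hh gh.
have ak : dot a k = 0 := d16 agh.
have gk : dot g k = 0 := P1 g h.
have hk' : dot h k = 0 := P2 g h.
have agk : dot (cross a g) k = 0 := d36 hg ag ah.
have akg : dot (cross a k) g = 0.
  by rewrite /k (ca6 ag ah gh) dotNl (d72 ag ah gh) oppr0.
have ahk : dot (cross a h) k = 0.
  by rewrite CC2 ag (dotC h g) gh !mulr0 subr0.
have akh : dot (cross a k) h = 0.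
  by rewrite /k (ca6 ag ah gh) dotNl (d74 a g h) oppr0.
have ahg : dot (cross a h) g = 0 by rewrite dot_crossC agh oppr0.
have hg' : dot h g = 0 by rewrite dotC.
have kg : dot k g = 0 by rewrite dotC.
have kh : dot k h = 0 by rewrite dotC.
have kX : k *m X = - (- (c1 + c2)) *: cross a k.
  by rewrite /k (x6 HX ag ah gh gX hX) (ca6 ag ah gh) opprK scalerN scaleNr.
case: (lerP 0 c1) => c1p; case: (lerP 0 c2) => c2p.
- case: (lerP c1 c2) => o.
    by apply: (pick (a := a) (p := g) (q := h) (mp := c1) (mq := c2)).
  by apply: (pick (a := a) (p := h) (q := g) (mp := c2) (mq := c1)) => //; lra.
- case: (lerP (c1 + c2) 0) => s.
    case: (lerP c1 (- (c1 + c2))) => o.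
      by apply: (pick (a := a) (p := g) (q := k) (mp := c1) (mq := - (c1 + c2))).
    by apply: (pick (a := a) (p := k) (q := g) (mp := - (c1 + c2)) (mq := c1)) => //; lra.
  case: (lerP (- c2) (c1 + c2)) => o.
    by apply: (pickN (a := a) (p := h) (q := k) (mp := c2) (mq := - (c1 + c2))) => //; lra.
  by apply: (pickN (a := a) (p := k) (q := h) (mp := - (c1 + c2)) (mq := c2)) => //; lra.
- case: (lerP (c1 + c2) 0) => s.
    case: (lerP c2 (- (c1 + c2))) => o.
      by apply: (pick (a := a) (p := h) (q := k) (mp := c2) (mq := - (c1 + c2))).
    by apply: (pick (a := a) (p := k) (q := h) (mp := - (c1 + c2)) (mq := c2)) => //; lra.
  case: (lerP (- c1) (c1 + c2)) => o.
    by apply: (pickN (a := a) (p := g) (q := k) (mp := c1) (mq := - (c1 + c2))) => //; lra.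
  by apply: (pickN (a := a) (p := k) (q := g) (mp := - (c1 + c2)) (mq := c1)) => //; lra.
- case: (lerP c2 c1) => o.
    by apply: (pickN (a := a) (p := g) (q := h) (mp := c1) (mq := c2)) => //; lra.
  by apply: (pickN (a := a) (p := h) (q := g) (mp := c2) (mq := c1)) => //; lra.
Qed.
End Main.

Theorem corollary3p7 (R : realType) (X : 'M[R]_7) :
  in_g2 X ->
  exists (F : 'M[R]_7) (lam nu mu : R),
    let f (n : nat) : 'rV[R]_7 := row (inord n.-1) F in
    G2_adapted F /\
    [/\ lam >= nu /\ nu >= mu /\ mu >= 0 /\ lam = nu + mu,
        (\matrix_(i < 7, j < 7) bform X (row i F) (row j F)) = normal_form mu nu lam,
        [\/ lam = mu, 0 < lam /\ mu = 0 | mu < lam /\ 0 < mu] &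
      [/\
        lam = mu -> lam = 0 /\ mu = 0 /\ nu = 0 /\ X = 0,
        0 < lam /\ mu = 0 ->
          [/\ lam = nu, \rank X = 4%N,
              (forall x, kerX X x <-> span3 (f 1%N) (f 2%N) (f 3%N) x) &
              associative_set (span3 (f 1%N) (f 2%N) (f 3%N))] &
        mu < lam /\ 0 < mu ->
          \rank X = 6%N /\ (forall x, kerX X x <-> span1 (f 1%N) x)]].
Proof. move=> HX; exact: final. Qed.
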